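(* Let $F$ be a finite family of seeds, $i\ge1$, $m\ge1$ and $0\le k\le im$ integers. If the $i$-regular expansion $i\otimes F$ solves the $(im,k)$-problem, then $F$ solves the $(im,k)$-problem and $F$ solves the $(m,\lfloor k/i\rfloor)$-problem.
   Context: A seed is a finite set $Q=\{p_1<\dots<p_d\}$ of nonnegative integers with $p_1=0$; its span is $p_d+1$. An $(m,k)$-similarity is a binary word of length $m$ with exactly $k$ zeros. $Q$ matches a binary word $w$ at position $j$ ($1\le j\le |w|-p_d$) if $w[j+p_t]=1$ for all $t$; $Q$ detects $w$ if it matches at some position. A family $F$ solves the $(m,k)$-problem if every $(m,k)$-similarity is detected by at least one seed of $F$. The $i$-regular expansion is $i\otimes Q=\{ip_1,\dots,ip_d\}$ and $i\otimes F=\{i\otimes Q:Q\in F\}$. *)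

(* Defs.v *)
From mathcomp Require Import all_boot.
Set Implicit Arguments. Unset Strict Implicit. Unset Printing Implicit Defensive.

(* A seed is a finite set of naturals containing 0, represented by a
   duplicate-free list (order irrelevant). *)
Definition is_seed (Q : seq nat) : bool := (0 \in Q) && uniq Q.

(* largest element p_d of a seed; span = seed_max Q + 1 *)
Definition seed_max (Q : seq nat) : nat := \max_(p <- Q) p.

(* A binary word is a seq bool (true = 1, false = 0); positions 0-indexed.
   An (m,k)-similarity: length m with exactly k zeros. *)
Definition similarity (m k : nat) (w : seq bool) : bool :=
  (size w == m) && (count (fun b => ~~ b) w == k).

(* Q matches w at (0-indexed) position j: j + p_d < |w| and w[j+p] = 1
   for all p in Q.  (Paper: 1-indexed j with 1 <= j <= |w| - p_d.) *)
Definition matches_at (Q : seq nat) (w : seq bool) (j : nat) : Prop :=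
  j + seed_max Q < size w /\ forall p, p \in Q -> nth false w (j + p) = true.

Definition detects (Q : seq nat) (w : seq bool) : Prop :=
  exists j, matches_at Q w j.

Definition solves (F : seq (seq nat)) (m k : nat) : Prop :=
  forall w, similarity m k w -> exists2 Q, Q \in F & detects Q w.

Definition expand (i : nat) (Q : seq nat) : seq nat := [seq i * p | p <- Q].
Definition expandF (i : nat) (F : seq (seq nat)) : seq (seq nat) :=
  [seq expand i Q | Q <- F].

(* Main.v *)
Require Import Defs.
From mathcomp Require Import all_boot.

Section Aux.
Variables (i m : nat).

Definition gidx (n : nat) := (n %% i) * m + n %/ i.
Definition inter (W : seq bool) := [seq nth false W (gidx n) | n <- iota 0 (i * m)].

Lemma gidx_lt n : 0 < i -> n < i * m -> gidx n < i * m.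
Proof.
move=> i0 hn; rewrite /gidx.
have h1 : n %/ i < m by rewrite ltn_divLR // mulnC.
have h2 : n %% i < i by rewrite ltn_mod.
apply: (@leq_trans ((n %% i) * m + m)); first by rewrite ltn_add2l.
by rewrite addnC -mulSn leq_mul2r h2 orbT.
Qed.

Lemma gidx_inj n1 n2 : 0 < i -> n1 < i * m -> n2 < i * m -> gidx n1 = gidx n2 -> n1 = n2.
Proof.
move=> i0 h1 h2; rewrite /gidx => e.
have a1 : n1 %/ i < m by rewrite ltn_divLR // mulnC.
have a2 : n2 %/ i < m by rewrite ltn_divLR // mulnC.
have q : n1 %% i = n2 %% i.
  have m0 : 0 < m by case: (m) a1.
  by have := congr1 (divn^~ m) e; rewrite /= !divnMDl // (divn_small a1) (divn_small a2) !addn0.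
have r : n1 %/ i = n2 %/ i.
  by have := congr1 (modn^~ m) e; rewrite !modnMDl !modn_small.
by rewrite (divn_eq n1 i) (divn_eq n2 i) q r.
Qed.

Lemma inter_count (p : pred bool) W : 0 < i -> size W = i * m -> count p (inter W) = count p W.
Proof.
move=> i0 sW.
have pe : perm_eq [seq gidx n | n <- iota 0 (i * m)] (iota 0 (i * m)).
  apply: uniq_perm.
  - rewrite map_inj_in_uniq ?iota_uniq // => x y; rewrite !mem_iota !add0n.
    by move=> hx hy; apply: gidx_inj.
  - exact: iota_uniq.
  have [] := @uniq_min_size _ [seq gidx n | n <- iota 0 (i * m)] (iota 0 (i * m)).
  - rewrite map_inj_in_uniq ?iota_uniq // => x y; rewrite !mem_iota !add0n.
    by move=> hx hy; apply: gidx_inj.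
  - move=> x /mapP [n]; rewrite mem_iota add0n => hn ->.
    by rewrite mem_iota add0n gidx_lt.
  - by rewrite !size_map.
  by [].
rewrite /inter.
have -> : [seq nth false W (gidx n) | n <- iota 0 (i * m)] = map (nth false W) (map gidx (iota 0 (i * m))) by rewrite -map_comp.
rewrite count_map (permP pe) -count_map.
by rewrite -sW -/(mkseq _ _) mkseq_nth.
Qed.

Lemma inter_nth W a s : a < m -> s < i -> nth false (inter W) (a * i + s) = nth false W (s * m + a).
Proof.
move=> am si; have i0 : 0 < i by case: (i) si.
have lt : a * i + s < i * m.
  apply: (@leq_trans (a * i + i)); first by rewrite ltn_add2l.
  by rewrite addnC -mulSn [i * m]mulnC leq_mul2r am orbT.
rewrite /inter (nth_map 0) ?size_iota // nth_iota // add0n /gidx.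
by rewrite modnMDl (modn_small si) divnMDl // (divn_small si) addn0.
Qed.

Lemma key W Q j : 0 < i -> size W = i * m -> matches_at (expand i Q) (inter W) j ->
  exists s a, [/\ s < i, a + seed_max Q < m & forall p, p \in Q -> nth false W (s * m + (a + p)) = true].
Proof.
move=> i0 sW [hj hp].
have smx : seed_max (expand i Q) = i * seed_max Q.
  rewrite /seed_max /expand big_map; elim: Q {hj hp} => [|x Q IH]; first by rewrite !big_nil muln0.
  by rewrite !big_cons IH maxnMr.
rewrite smx /inter size_map size_iota in hj.
exists (j %% i), (j %/ i).
have am : j %/ i + seed_max Q < m.
  rewrite -(ltn_pmul2r i0) mulnDl.
  apply: (@leq_ltn_trans (j + seed_max Q * i)).
    by rewrite leq_add2r leq_divM.
  by rewrite mulnC [m * _]mulnC.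
split => //; first by rewrite ltn_mod.
move=> p pQ.
have pm : p <= seed_max Q by rewrite /seed_max; exact: (@leq_bigmax_seq _ _ xpredT id p pQ).
have := hp (i * p) (map_f _ pQ).
rewrite {1}(divn_eq j i) -addnA [_ %% i + _]addnC addnA [i * p]mulnC -mulnDl inter_nth //.
  by apply: leq_ltn_trans am; rewrite leq_add2l.
by rewrite ltn_mod.
Qed.
End Aux.

Lemma nth_flat_nseq (u : seq bool) m n s x : size u = m -> x < m -> s < n ->
  nth false (flatten (nseq n u)) (s * m + x) = nth false u x.
Proof.
move=> su xm; elim: n s => [|n IH] s //.
case: s => [|s] sn /=.
  by rewrite mul0n add0n nth_cat su xm.
rewrite nth_cat su ltnNge mulSn -addnA leq_addr /= addKn IH //.
Qed.

Lemma count_flat_nseq (p : pred bool) (u : seq bool) n :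
  count p (flatten (nseq n u)) = n * count p u.
Proof. by elim: n => //= n IH; rewrite count_cat IH mulSn. Qed.

Lemma size_flat_nseq (u : seq bool) n : size (flatten (nseq n u)) = n * size u.
Proof. by elim: n => //= n IH; rewrite size_cat IH mulSn. Qed.

Lemma nthW (v v' : seq bool) m i r s x : size v = m -> size v' = m -> r <= i ->
  (forall y, nth false v' y -> nth false v y) -> s < i -> x < m ->
  nth false (flatten (nseq r v') ++ flatten (nseq (i - r) v)) (s * m + x) ->
  nth false v x.
Proof.
move=> sv sv' ri hv' si xm.
rewrite nth_cat size_flat_nseq sv'.
case: (ltnP s r) => sr.
  have -> : s * m + x < r * m.
    apply: (@leq_trans (s.+1 * m)); first by rewrite mulSn [m + _]addnC ltn_add2l.
    by rewrite leq_mul2r sr orbT.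
  by rewrite nth_flat_nseq // => /hv'.
have -> : (s * m + x < r * m) = false.
  apply/negbTE; rewrite -leqNgt; apply: leq_trans (leq_addr _ _).
  by rewrite leq_mul2r sr orbT.
have -> : s * m + x - r * m = (s - r) * m + x by rewrite mulnBl [(_ - _) + x]addnC addnBA ?leq_mul2r ?sr ?orbT // addnC.
rewrite nth_flat_nseq //.
by rewrite ltn_sub2r // (leq_ltn_trans sr).
Qed.

Theorem mainTheorem5 (F : seq (seq nat)) (i m k : nat) :
  all is_seed F -> 1 <= i -> 1 <= m -> k <= i * m ->
  solves (expandF i F) (i * m) k ->
  solves F (i * m) k /\ solves F m (k %/ i).
Proof.
move=> _ i0 m0 km H; split.
  move=> w /andP [/eqP sw /eqP cw].
  have [Q' Q'F [j hj]] : exists2 Q, Q \in expandF i F & detects Q (inter i m w).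
    apply: H; rewrite /similarity /inter size_map size_iota eqxx /=.
    by rewrite inter_count // cw.
  case/mapP: Q'F => Q QF eQ; subst Q'.
  have [s [a [si am hp]]] := @key i m w Q j i0 sw hj.
  exists Q => //; exists (s * m + a); split.
    rewrite sw -addnA.
    apply: (@leq_trans (s * m + m)); first by rewrite ltn_add2l.
    by rewrite addnC -mulSn leq_mul2r si orbT.
  by move=> p pQ; rewrite -addnA hp.
move=> v /andP [/eqP sv /eqP cv].
set c := k %/ i; set r := k %% i.
have kdec : k = c * i + r by rewrite /c /r -divn_eq.
have ri : r <= i by rewrite ltnW // ltn_mod.
have [v' [sv' hv' cv']] : exists v' : seq bool, [/\ size v' = m,
    (forall y, nth false v' y -> nth false v y) & count (fun b => ~~ b) v' = c + (0 < r)].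
  case: (posnP r) => r0.
    by exists v; split => //; rewrite ?r0 addn0.
  have cm : c < m.
    rewrite ltnNge; apply/negP => mc.
    have : c * i + r <= i * m by rewrite -kdec.
    rewrite mulnC; move/(leq_trans (leq_add (leq_mul (leqnn i) mc) (leqnn r))).
    by rewrite -{2}[i * m]addn0 leq_add2l leqn0 => /eqP r00; rewrite r00 in r0.
  have : has id v.
    rewrite has_count; have := count_predC id v; rewrite sv.
    have -> : count (predC id) v = c by exact: cv.
    by move=> e; rewrite -(ltn_add2r c) e add0n.
  case/hasP => b bv hb; rewrite /= in hb; rewrite hb in bv.
  move: cv; case/splitPr: bv sv => v1 v2 sv cv.
  exists (v1 ++ false :: v2); split.
  - by rewrite -sv !size_cat.
  - move=> y; rewrite !nth_cat; case: (y < size v1) => //.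
    by case: (y - size v1).
  - by rewrite /c -cv !count_cat /= add0n addnCA addnC.
set W := flatten (nseq r v') ++ flatten (nseq (i - r) v).
have sW : size W = i * m.
  by rewrite size_cat !size_flat_nseq sv sv' -mulnDl subnKC // mulnC.
have [Q' Q'F [j hj]] : exists2 Q, Q \in expandF i F & detects Q (inter i m W).
  apply: H; rewrite /similarity /inter size_map size_iota eqxx /=.
  rewrite inter_count // count_cat !count_flat_nseq cv' cv mulnDr.
  have -> : r * (0 < r) = r by case: (r) => //= n; rewrite muln1.
  by rewrite addnAC -mulnDl subnKC // mulnC -kdec.
case/mapP: Q'F => Q QF eQ; subst Q'.
have [s [a [si am hp]]] := @key i m W Q j i0 sW hj.
exists Q => //; exists a; split; first by rewrite sv.
move=> p pQ.
have pm : p <= seed_max Q by rewrite /seed_max; exact: (@leq_bigmax_seq _ _ xpredT id p pQ).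
apply: (@nthW v v' m i r s (a + p) sv sv' ri hv' si); last by have := hp p pQ.
by apply: leq_ltn_trans am; rewrite leq_add2l.
Qed.
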